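(* Let $S\in\mathbb{R}^d$ be a random vector with density $f(\cdot\mid\beta^* )$ and let $\Omega\in\mathbb{R}^p$ be a random vector, independent of $S$, with density $g$ supported on $\mathbb{R}^p$. Let $D\in\mathbb{R}^{p\times d}$, $P\in\mathbb{R}^{p\times p}$ invertible and $q\in\mathbb{R}^p$ be fixed, and define the optimization variable $O\in\mathbb{R}^p$ through the inversion map $\Omega = DS+PO+q$, i.e. $O=P^{-1}(\Omega-DS-q)$. Then for every convex, compact set $\mathcal{R}\subset\mathbb{R}^d\times\mathbb{R}^p$, \[ \log\mathbb{P}\big((S,O)\in\mathcal{R}\mid\beta^*\big)\;\le\;-\inf_{(s,o)\in\mathcal{R}}\Big\{\Lambda_f^*(s\mid\beta^* )+\Lambda_g^*(Ds+Po+q)\Big\}. \]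
   Context: $\Lambda_f(t\mid\beta^* )=\log\mathbb{E}[\exp(t^TS)\mid\beta^*]$ is the log moment generating function (log-MGF) of $S$ and $\Lambda_f^*(s\mid\beta^* )=\sup_{t\in\mathbb{R}^d}\{t^Ts-\Lambda_f(t\mid\beta^* )\}$ its convex conjugate; similarly $\Lambda_g(t)=\log\mathbb{E}[\exp(t^T\Omega)]$ and $\Lambda_g^*(w)=\sup_{t\in\mathbb{R}^p}\{t^Tw-\Lambda_g(t)\}$. The probability is with respect to the joint law of $(S,O)$ induced by the independent laws of $S$ and $\Omega$. *)

(* Defs.v *)
From HB Require Import structures.
From mathcomp Require Import all_boot all_order all_algebra.
From mathcomp Require Import all_classical all_reals all_analysis.

Set Implicit Arguments.
Unset Strict Implicit.
Unset Printing Implicit Defensive.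

Import Order.TTheory GRing.Theory Num.Theory.
Import numFieldNormedType.Exports.

Local Open Scope classical_set_scope.
Local Open Scope ring_scope.

Section Defs.
Variable R : realType.

Definition cV_borel (n : nat) : set (set 'cV[R]_n) :=
  <<s [set A : set 'cV[R]_n | open A] >>.

(* Lebesgue integral on R^n, as the iterated one-dimensional Lebesgue
   integral (Tonelli): for n = 0 it is evaluation at the unique point. *)
Fixpoint iint (n : nat) : ('cV[R]_n -> \bar R) -> \bar R :=
  match n return ('cV[R]_n -> \bar R) -> \bar R with
  | 0 => fun F => F 0
  | n'.+1 => fun F =>
      (\int[@lebesgue_measure R]_x iint (fun y : 'cV[R]_n' => F (col_mx (x%:M) y)))%E
  end.

Definition has_density (d0 : measure_display) (T : measurableType d0)
    (Pr : probability T R) (n : nat) (X : T -> 'cV[R]_n) (f : 'cV[R]_n -> R) :=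
  [/\ forall B : set R, measurable B -> cV_borel (f @^-1` B),
      forall x, 0 <= f x &
      forall A, cV_borel A -> Pr (X @^-1` A) = iint (fun x => (\1_A x * f x)%:E)].

Definition random_vector (d0 : measure_display) (T : measurableType d0)
    (n : nat) (X : T -> 'cV[R]_n) :=
  forall A, cV_borel A -> measurable (X @^-1` A).

Definition indep_rv (d0 : measure_display) (T : measurableType d0)
    (Pr : probability T R) (n m : nat) (X : T -> 'cV[R]_n) (Y : T -> 'cV[R]_m) :=
  forall A B, cV_borel A -> cV_borel B ->
    Pr (X @^-1` A `&` Y @^-1` B) = (Pr (X @^-1` A) * Pr (Y @^-1` B))%E.

Definition logMGF (d0 : measure_display) (T : measurableType d0)
    (Pr : probability T R) (n : nat) (X : T -> 'cV[R]_n) (t : 'cV[R]_n) : \bar R :=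
  lne (\int[Pr]_w (expR ((t^T *m X w) 0 0))%:E)%E.

Definition logMGF_conj (d0 : measure_display) (T : measurableType d0)
    (Pr : probability T R) (n : nat) (X : T -> 'cV[R]_n) (s : 'cV[R]_n) : \bar R :=
  ereal_sup (range (fun t : 'cV[R]_n => ((t^T *m s) 0 0)%:E - logMGF Pr X t))%E.

Definition convex_pair (d p : nat) (A : set ('cV[R]_d * 'cV[R]_p)) :=
  forall x y (l : R), A x -> A y -> 0 <= l <= 1 ->
    A (l *: x.1 + (1 - l) *: y.1, l *: x.2 + (1 - l) *: y.2).

End Defs.

(* Main.v *)
Require Import Defs.
From HB Require Import structures.
From mathcomp Require Import all_boot all_order all_algebra.
From mathcomp Require Import all_classical all_reals all_analysis.
From mathcomp Require Import ring lra finmap measurable_realfun.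

Import Order.TTheory GRing.Theory Num.Def Num.Theory.
Import numFieldNormedType.Exports.

Local Open Scope classical_set_scope.
Local Open Scope ring_scope.

Section Minimax.
Variable R : realType.
Variable X : ptopologicalType.

Lemma cont_sum (I : Type) (s : seq I) (F : I -> X -> R) :
  (forall i, continuous (F i)) -> continuous (fun x => \sum_(i <- s) F i x).
Proof.
move=> hF; elim: s => [|i s IH].
  have -> : (fun x => \sum_(i <- [::]) F i x) = fun=> 0.
    by apply: funext => x; rewrite big_nil.
  exact: cst_continuous.
have -> : (fun x => \sum_(j <- i :: s) F j x) =
   (F i + (fun x => \sum_(j <- s) F j x))%R.
  by apply: funext => x; rewrite big_cons.
by move=> x; apply: continuousD; [exact: hF|exact: IH].
Qed.

Lemma hsq_le (z e : R) :
  (maxr (z + e) 0) ^+ 2 <= (maxr z 0) ^+ 2 + 2 * maxr z 0 * e + e ^+ 2.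
Proof.
by case: (lerP 0 z) => hz; case: (lerP 0 (z + e)) => hze; nra.
Qed.

Lemma minimax (seg : R -> X -> X -> X) (C : set X) (I : choiceType)
  (DI : set I) (psi : I -> X -> R) (c : R) :
  compact C -> C !=set0 ->
  (forall x y l, C x -> C y -> 0 <= l <= 1 -> C (seg l x y)) ->
  (forall i x y l, psi i (seg l x y) = l * psi i x + (1 - l) * psi i y) ->
  (forall i, continuous (psi i)) ->
  (forall x, C x -> exists2 i, DI i & c < psi i x) ->
  exists s : seq (R * I), [/\ (forall p, p \in s -> 0 <= p.1 /\ DI p.2),
     \sum_(p <- s) p.1 = 1 & forall x, C x -> c <= \sum_(p <- s) p.1 * psi p.2 x].
Proof.
move=> cC [x0 Cx0] convC aff cont cov.
have [F FD CF] : finite_subset_cover DI (fun i => [set x | c < psi i x]) C.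
  move: cC; rewrite compact_cover => cC; apply: cC.
    move=> i _; apply: (@open_comp _ _ (psi i) [set y | c < y]).
      by move=> x _; exact: cont.
    exact: open_gt.
  move=> x Cx; have [i Di ci] := cov x Cx; by exists i.
pose Fs : seq I := F.
pose G x := \sum_(i <- Fs) (maxr (psi i x - c) 0) ^+ 2.
have Gc : continuous G.
  apply: cont_sum => i.
  have mc : continuous (fun x => maxr (psi i x - c) 0).
    move=> x; apply: (continuous_max (f := fun x => psi i x - c) (g := fun=> 0)).
      apply: (continuousB (f := psi i) (g := fun=> c)); first exact: cont.
      exact: cst_continuous.
    exact: cst_continuous.
  have -> : (fun x => maxr (psi i x - c) 0 ^+ 2) =
    ((fun x => maxr (psi i x - c) 0) \* (fun x => maxr (psi i x - c) 0)).
    by apply: funext => x; rewrite /= expr2.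
  by move=> x; apply: continuousM; exact: mc.
have [xs Cxs xsmin] : exists2 xs, xs \in C & forall t, t \in C -> G xs <= G t.
  apply: compact_EVT_min => //; first by exists x0.
  exact: continuous_subspaceT.
move: Cxs; rewrite in_setE => Cxs.
pose lam i := maxr (psi i xs - c) 0.
have lam0 i : 0 <= lam i by rewrite /lam le_max lexx orbT.
pose L := \sum_(i <- Fs) lam i.
have L0 : 0 < L.
  have [i Fi ci] := CF xs Cxs.
  have Fi' : i \in Fs by move: Fi; rewrite /= => ->.
  rewrite /L (bigD1_seq i) //=; last exact: fset_uniq.
  apply: (@lt_le_trans _ _ (lam i)).
    by rewrite /lam lt_max; apply/orP; left; rewrite subr_gt0.
  by rewrite lerDl; apply: sumr_ge0 => j _.
have var x : C x -> 0 <= \sum_(i <- Fs) lam i * (psi i x - psi i xs).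
  move=> Cx.
  set A := \sum_(i <- Fs) lam i * (psi i x - psi i xs).
  pose B := \sum_(i <- Fs) (psi i x - psi i xs) ^+ 2.
  have B0 : 0 <= B by apply: sumr_ge0 => i _; exact: sqr_ge0.
  have key l : 0 < l <= 1 -> 0 <= 2 * l * A + l ^+ 2 * B.
    case/andP => l0 l1.
    have Cy : C (seg l x xs) by apply: convC => //; rewrite (ltW l0) l1.
    have := xsmin _ (mem_set Cy).
    rewrite /G => h.
    have h2 : \sum_(i <- Fs) (maxr (psi i (seg l x xs) - c) 0) ^+ 2 <=
       \sum_(i <- Fs) ((maxr (psi i xs - c) 0) ^+ 2 + 2 * lam i * (l * (psi i x - psi i xs))
          + (l * (psi i x - psi i xs)) ^+ 2).
      apply: ler_sum => i _; rewrite aff.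
      have -> : l * psi i x + (1 - l) * psi i xs - c = (psi i xs - c) + l * (psi i x - psi i xs)
        by ring.
      exact: hsq_le.
    have := le_trans h h2.
    rewrite !big_split /= -!addrA lerDl.
    have -> : \sum_(i <- Fs) 2 * lam i * (l * (psi i x - psi i xs)) = 2 * l * A.
      rewrite /A mulr_sumr; apply: eq_bigr => i _; ring.
    have -> : \sum_(i <- Fs) (l * (psi i x - psi i xs)) ^+ 2 = l ^+ 2 * B.
      rewrite /B mulr_sumr; apply: eq_bigr => i _; ring.
    by [].
  rewrite leNgt; apply/negP => A0.
  have BA : 0 < B - A by rewrite subr_gt0 (lt_le_trans A0).
  pose l := - A / (B - A).
  have l0 : 0 < l by rewrite /l divr_gt0 // oppr_gt0.
  have l1 : l <= 1 by rewrite /l ler_pdivrMr // mul1r; lra.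
  have := key l; rewrite l0 l1 => /(_ isT).
  have lB : l * B <= - A.
    rewrite /l mulrAC ler_pdivrMr //.
    have hA : 0 <= - A by lra.
    have : B <= B - A by lra.
    move=> hB; nra.
  have : l * (2 * A + l * B) < 0.
    rewrite pmulr_rlt0 //; lra.
  move=> h1 h2; have : 2 * l * A + l ^+ 2 * B = l * (2 * A + l * B) by ring.
  lra.
exists [seq (lam i / L, i) | i <- Fs]; split.
- move=> p /mapP [i Fi ->] /=; split; first by rewrite divr_ge0 // ltW.
  by have := FD i Fi; rewrite in_setE.
- rewrite big_map /= -mulr_suml -/L divff //; exact: lt0r_neq0.
- move=> x Cx; rewrite big_map /=.
  have -> : \sum_(i <- Fs) lam i / L * psi i x = (\sum_(i <- Fs) lam i * psi i x) / L.
    rewrite mulr_suml; apply: eq_bigr => i _; ring.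
  rewrite ler_pdivlMr //.
  have h1 := var x Cx.
  have h2 : 0 <= \sum_(i <- Fs) lam i * (psi i xs - c).
    apply: sumr_ge0 => i _; rewrite /lam.
    by case: (lerP 0 (psi i xs - c)) => h; nra.
  have e1 : \sum_(i <- Fs) lam i * psi i x =
     \sum_(i <- Fs) lam i * (psi i x - psi i xs) + \sum_(i <- Fs) lam i * (psi i xs - c)
     + c * L.
    rewrite /L mulr_sumr -!big_split /=; apply: eq_bigr => i _; ring.
  rewrite e1 mulrC; lra.
Qed.

End Minimax.

Section Meas.
Variables (R : realType) (d0 : measure_display) (T : measurableType d0).

Definition cVm n := g_sigma_algebraType [set A : set 'cV[R]_n | open A].

Lemma rv_meas n (X : T -> 'cV[R]_n) : random_vector X ->
  measurable_fun setT (X : T -> cVm n).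
Proof. by move=> h _ A mA; rewrite setTI; exact: h. Qed.

Lemma coord_meas n (i : 'I_n) : measurable_fun setT (fun x : cVm n => x i 0 : R).
Proof.
have mE : (measurable : set (set R)) = <<s @RGenOInfty.G R >>.
  exact: (RGenOInfty.measurableE R).
apply: (@measurability _ _ (cVm n) R setT (fun x : cVm n => x i 0 : R) _ mE) => _ [_ [c ->] <-].
rewrite setTI; apply: sub_sigma_algebra => /=.
apply: (@open_comp _ _ (fun x : 'cV[R]_n => x i 0) `]c, +oo[%classic).
  by move=> x _; exact: coord_continuous.
have -> : `]c, +oo[%classic = [set y : R | c < y].
  by apply: funext => y; rewrite /= in_itv /= andbT.
exact: open_gt.
Qed.

Lemma rv_coord n (X : T -> 'cV[R]_n) i : random_vector X ->
  measurable_fun setT (fun w => X w i 0).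
Proof.
move=> h; apply: (measurableT_comp (f := fun x : cVm n => x i 0 : R) (g := X : T -> cVm n)).
  exact: coord_meas.
exact: rv_meas.
Qed.

Definition cmeas {n} (X : T -> 'cV[R]_n) := forall i, measurable_fun setT (fun w => X w i 0).

Lemma cmeas_add n (X Y : T -> 'cV[R]_n) : cmeas X -> cmeas Y -> cmeas (fun w => X w + Y w).
Proof.
move=> hX hY i.
have -> : (fun w => (X w + Y w) i 0) = (fun w => X w i 0 + Y w i 0).
  by apply: funext => w; rewrite mxE.
exact: measurable_funD.
Qed.

Lemma cmeas_opp n (X : T -> 'cV[R]_n) : cmeas X -> cmeas (fun w => - X w).
Proof.
move=> hX i.
have -> : (fun w => (- X w) i 0) = (fun w => - X w i 0).
  by apply: funext => w; rewrite mxE.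
exact: measurable_funN.
Qed.

Lemma cmeas_cst n (c : 'cV[R]_n) : cmeas (fun _ => c).
Proof. by move=> i; exact: measurable_cst. Qed.

Lemma cmeas_mul k n (M : 'M[R]_(k, n)) (X : T -> 'cV[R]_n) : cmeas X -> cmeas (fun w => M *m X w).
Proof.
move=> hX i.
have -> : (fun w => (M *m X w) i 0) = (fun w => \sum_j M i j * X w j 0).
  by apply: funext => w; rewrite mxE.
apply: measurable_sum => j; apply: measurable_funM => //; exact: measurable_cst.
Qed.

Lemma dot_meas n (a : 'cV[R]_n) (X : T -> 'cV[R]_n) : cmeas X ->
  measurable_fun setT (fun w => (a^T *m X w) 0 0).
Proof.
move=> hX; exact: (@cmeas_mul 1 n a^T X hX 0).
Qed.

End Meas.
Arguments cmeas {R d0 T n}.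

HB.instance Definition _ (R : realType) (n m : nat) :=
  Pointed.on ('cV[R]_n * 'cV[R]_m)%type.

Section Event.
Variables (R : realType) (d0 : measure_display) (T : measurableType d0).
Variables (n m : nat) (Z1 : T -> 'cV[R]_n) (Z2 : T -> 'cV[R]_m).
Hypotheses (h1 : cmeas Z1) (h2 : cmeas Z2).

Lemma ballP (y x : ('cV[R]_n * 'cV[R]_m)%type) r : ball y r x <->
  (0 < r /\ (forall i, `|y.1 i 0 - x.1 i 0| < r) /\ (forall i, `|y.2 i 0 - x.2 i 0| < r)).
Proof.
rewrite /ball /= /prod_ball /= /ball /= /mx_ball /=.
split.
  move=> [[r0 H1] [_ H2]]; split => //; split => i.
    by have := H1 i 0; rewrite /ball /=.
  by have := H2 i 0; rewrite /ball /=.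
move=> [r0 [H1 H2]]; split; split => // i j; rewrite (ord1 j) /ball /=.
  exact: H1.
exact: H2.
Qed.

Lemma ltabs_meas (f : T -> R) (c r : R) : measurable_fun setT f ->
  measurable [set w | `|c - f w| < r].
Proof.
move=> mf.
have -> : [set w | `|c - f w| < r] = setT `&` (fun w => `|c - f w|) @^-1` `]-oo, r[.
  by apply: funext => w; rewrite setTI /= in_itv /=.
have mh : measurable_fun setT (fun w => `|c - f w|).
  apply: (measurableT_comp (f := (@normr _ R))); first exact: normr_measurable.
  apply: measurable_funB => //; exact: measurable_cst.
exact: (mh measurableT _ (measurable_itv _)).
Qed.

Lemma ball_meas (y : ('cV[R]_n * 'cV[R]_m)%type) r : 0 < r ->
  measurable [set w | ball y r (Z1 w, Z2 w)].
Proof.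
move=> r0.
have -> : [set w | ball y r (Z1 w, Z2 w)] =
  \bigcap_(i in [set: 'I_n]) [set w | `|y.1 i 0 - Z1 w i 0| < r] `&`
  \bigcap_(i in [set: 'I_m]) [set w | `|y.2 i 0 - Z2 w i 0| < r].
  apply/seteqP; split => w /=.
    by move=> /ballP [_ [H1 H2]]; split => i _; [exact: H1|exact: H2].
  by move=> [H1 H2]; apply/ballP; split => //; split => i; [exact: H1|exact: H2].
apply: measurableI; apply: fin_bigcap_measurable => //; try exact: finite_finset.
  by move=> i _; exact: ltabs_meas.
by move=> i _; exact: ltabs_meas.
Qed.

Lemma event_meas (K : set ('cV[R]_n * 'cV[R]_m)) : compact K ->
  measurable [set w | K (Z1 w, Z2 w)].
Proof.
move=> cK.
pose r (k : nat) : R := (k.+1%:R)^-1.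
have r0 k : 0 < r k by rewrite /r invr_gt0 ltr0Sn.
have : forall k : nat, exists F : {fset ('cV[R]_n * 'cV[R]_m)},
    {subset F <= K} /\ K `<=` cover [set` F] (fun y => ball y (r k)).
  move=> k; move: cK; rewrite compact_cover => cK.
  have [|F FK KF] := cK _ K (fun y => ball y (r k)) (fun y _ => ball_open y (r k)).
    by move=> x Kx; exists x => //; exact: ballxx.
  by exists F; split.
move=> /choice [F hF].
have -> : [set w | K (Z1 w, Z2 w)] =
  \bigcap_k \bigcup_(y in [set` F k]) [set w | ball y (r k) (Z1 w, Z2 w)].
  apply/seteqP; split => w /=.
    move=> Kz k _; have [_ KF] := hF k.
    have [y Fy yz] := KF _ Kz; by exists y.
  move=> H.
  have clK : closed K by apply: compact_closed => //; exact: norm_hausdorff.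
  apply: clK => B /nbhs_ballP [e /= e0 eB].
  have [N _ hN] := near_infty_natSinv_lt (PosNum e0).
  have [y Fy yz] := H N I.
  have [FK _] := hF N.
  exists y; split; first by have := FK y Fy; rewrite in_setE.
  apply: eB; apply: (@le_ball _ _ _ (r N)); first exact/ltW/(hN N (leqnn N)).
  exact: ball_sym.
apply: bigcapT_measurable => k.
apply: fin_bigcup_measurable; first exact: finite_fset.
by move=> y _; exact: ball_meas.
Qed.

End Event.

Definition sf {R : realType} {U : Type} {K : Type} (s : seq K) (c : K -> R)
  (A : K -> set U) (x : U) : R := \sum_(k <- s) c k * \1_(A k) x.

Section SF.
Variables (R : realType) (d0 : measure_display) (T : measurableType d0)
  (Pr : probability T R).

Lemma Pr_fin (A : set T) : measurable A -> Pr A = (fine (Pr A))%:E.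
Proof. by move=> mA; rewrite fineK //; exact: fin_num_measure. Qed.

Lemma int_sf (K : Type) (s : seq K) (c : K -> R) (A : K -> set T) :
  (forall k, 0 <= c k) -> (forall k, measurable (A k)) ->
  (\int[Pr]_w (sf s c A w)%:E = (\sum_(k <- s) c k * fine (Pr (A k)))%:E)%E.
Proof.
move=> c0 mA; rewrite /sf.
under eq_integral do rewrite -sumEFin.
rewrite ge0_integral_sum //; last 2 first.
- move=> k; apply: measurableT_comp => //; apply: measurable_funM.
    exact: measurable_cst.
  exact: measurable_indic.
- by move=> k w _; rewrite lee_fin mulr_ge0.
rewrite -sumEFin; apply: eq_bigr => k _.
under eq_integral do rewrite EFinM.
have mi : measurable_fun setT (fun w => (\1_(A k) w : R)%:E).
  by apply: measurableT_comp => //; exact: measurable_indic.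
rewrite (ge0_integralZl _ _ mi) //; last by rewrite lee_fin.
rewrite integral_indic // setIT EFinM -Pr_fin //.
Qed.

End SF.

Section Approx.
Variables (R : realType) (d : measure_display) (U : measurableType d)
  (f : U -> \bar R).
Hypothesis mf : measurable_fun setT f.

Definition apx_c (n : nat) (k : option nat) : R :=
  if k is Some k then k%:R * 2 ^- n else n%:R.
Definition apx_A (n : nat) (k : option nat) : set U :=
  if k is Some k then dyadic_approx setT f n k else integer_approx setT f n.
Definition apx_s (n : nat) : seq (option nat) :=
  None :: map Some (iota 0 (n * 2 ^ n)).

Lemma approx_sf n : approx setT f n = sf (apx_s n) (apx_c n) (apx_A n).
Proof.
apply: funext => x; rewrite /approx /sf big_cons /= big_map addrC; congr (_ + _).
by rewrite -(big_mkord xpredT (fun k => k%:R * 2 ^- n * \1_(dyadic_approx setT f n k) x))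
  /index_iota subn0.
Qed.

Lemma apx_c0 n k : 0 <= apx_c n k.
Proof. by case: k => [k|] /=; rewrite ?mulr_ge0 ?invr_ge0 ?exprn_ge0. Qed.

Lemma apx_mA n k : measurable (apx_A n k).
Proof.
case: k => [k|] /=; last exact: emeasurable_fun_c_infty.
rewrite /dyadic_approx; case: ifPn => [kn|_]//; rewrite -preimage_comp.
by apply: mf => //; apply/measurable_image_EFin; exact: measurable_itv.
Qed.

End Approx.

Section Indep.
Variables (R : realType) (d0 d1 d2 : measure_display) (T : measurableType d0)
  (T1 : measurableType d1) (T2 : measurableType d2) (Pr : probability T R)
  (X : T -> T1) (Y : T -> T2).
Hypotheses (mX : measurable_fun setT X) (mY : measurable_fun setT Y)
  (ind : forall A B, measurable A -> measurable B ->
     Pr (X @^-1` A `&` Y @^-1` B) = (Pr (X @^-1` A) * Pr (Y @^-1` B))%E).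

Lemma mpreX A : measurable A -> measurable (X @^-1` A).
Proof. by move=> mA; rewrite -[X @^-1` A]setTI; exact: mX. Qed.
Lemma mpreY A : measurable A -> measurable (Y @^-1` A).
Proof. by move=> mA; rewrite -[Y @^-1` A]setTI; exact: mY. Qed.

Lemma sf_comp (V W : Type) (K : Type) (h : V -> W) s (c : K -> R) A x :
  sf s c A (h x) = sf s c (fun k => h @^-1` A k) x.
Proof. by []. Qed.

Lemma int_sf_prod (K1 K2 : Type) s1 s2 (c1 : K1 -> R) (c2 : K2 -> R)
  (A1 : K1 -> set T1) (A2 : K2 -> set T2) :
  (forall k, 0 <= c1 k) -> (forall k, 0 <= c2 k) ->
  (forall k, measurable (A1 k)) -> (forall k, measurable (A2 k)) ->
  (\int[Pr]_w (sf s1 c1 A1 (X w) * sf s2 c2 A2 (Y w))%:E =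
   \int[Pr]_w (sf s1 c1 A1 (X w))%:E * \int[Pr]_w (sf s2 c2 A2 (Y w))%:E)%E.
Proof.
move=> c10 c20 mA1 mA2.
have e3 w : sf s1 c1 A1 (X w) * sf s2 c2 A2 (Y w) =
  sf [seq (k, l) | k <- s1, l <- s2] (fun kl => c1 kl.1 * c2 kl.2)
    (fun kl => X @^-1` A1 kl.1 `&` Y @^-1` A2 kl.2) w.
  rewrite /sf big_allpairs big_distrlr /=; apply: eq_bigr => k _.
  apply: eq_bigr => l _; rewrite indicI /=.
  have -> : \1_(X @^-1` A1 k) w = \1_(A1 k) (X w) :> R by [].
  have -> : \1_(Y @^-1` A2 l) w = \1_(A2 l) (Y w) :> R by [].
  ring.
under eq_integral do rewrite e3.
under [X in (_ = X * _)%E]eq_integral do rewrite sf_comp.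
under [X in (_ = _ * X)%E]eq_integral do rewrite sf_comp.
rewrite !int_sf //; last 4 first.
- by move=> k; exact: mpreY.
- by move=> k; exact: mpreX.
- by move=> [k l]; rewrite mulr_ge0.
- by move=> [k l] /=; apply: measurableI; [exact: mpreX|exact: mpreY].
rewrite -EFinM; congr (_%:E).
rewrite big_allpairs big_distrlr /=; apply: eq_bigr => k _.
apply: eq_bigr => l _.
rewrite ind // fineM; [ring|apply: fin_num_measure; exact: mpreX|apply: fin_num_measure; exact: mpreY].
Qed.

Lemma indep_int_le (u : T1 -> R) (v : T2 -> R) :
  (forall x, 0 <= u x) -> (forall y, 0 <= v y) ->
  measurable_fun setT u -> measurable_fun setT v ->
  (\int[Pr]_w (u (X w) * v (Y w))%:E <=
   \int[Pr]_w (u (X w))%:E * \int[Pr]_w (v (Y w))%:E)%E.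
Proof.
move=> u0 v0 mu mv.
pose fu := fun x => (u x)%:E. pose fv := fun y => (v y)%:E.
have mfu : measurable_fun setT fu by apply/measurable_EFinP.
have mfv : measurable_fun setT fv by apply/measurable_EFinP.
have fu0 x : setT x -> (0 <= fu x)%E by move=> _; rewrite lee_fin.
have fv0 x : setT x -> (0 <= fv x)%E by move=> _; rewrite lee_fin.
pose a n := approx setT fu n. pose b n := approx setT fv n.
have a0 n x : 0 <= a n x.
  by rewrite /a approx_sf /sf; apply: sumr_ge0 => k _; rewrite mulr_ge0 ?apx_c0.
have b0 n x : 0 <= b n x.
  by rewrite /b approx_sf /sf; apply: sumr_ge0 => k _; rewrite mulr_ge0 ?apx_c0.
have au n x : a n x <= u x by rewrite -lee_fin; exact: le_approx.
have bv n x : b n x <= v x by rewrite -lee_fin; exact: le_approx.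
have ma n : measurable_fun setT (a n).
  rewrite /a approx_sf /sf; apply: measurable_sum => k; apply: measurable_funM => //; apply: measurable_indic; exact: apx_mA.
have mb n : measurable_fun setT (b n).
  rewrite /b approx_sf /sf; apply: measurable_sum => k; apply: measurable_funM => //; apply: measurable_indic; exact: apx_mA.
have nda x n m : (n <= m)%N -> a n x <= a m x.
  by move=> nm; have /lefP := nd_approx setT fu nm; apply.
have ndb x n m : (n <= m)%N -> b n x <= b m x.
  by move=> nm; have /lefP := nd_approx setT fv nm; apply.
have cva x : a n x @[n --> \oo] --> u x.
  have := @cvg_approx _ _ _ setT fu x fu0 I (ltry _); by [].
have cvb x : b n x @[n --> \oo] --> v x.
  have := @cvg_approx _ _ _ setT fv x fv0 I (ltry _); by [].
pose g n w := (a n (X w) * b n (Y w))%:E.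
have mg n : measurable_fun setT (g n).
  apply/measurable_EFinP; apply: measurable_funM.
    exact: measurableT_comp (ma n) mX.
  exact: measurableT_comp (mb n) mY.
have g0 n w : setT w -> (0 <= g n w)%E by move=> _; rewrite lee_fin mulr_ge0.
have ndg w : setT w -> {homo g ^~ w : n m / (n <= m)%N >-> (n <= m)%E}.
  move=> _ n m nm; rewrite lee_fin; apply: ler_pM => //.
    exact: nda.
  exact: ndb.
have limg w : limn (g ^~ w) = (u (X w) * v (Y w))%:E.
  apply: cvg_lim => //; apply: cvg_EFin; first exact: nearW.
  exact: cvgM.
have cv := @cvg_monotone_convergence _ _ _ Pr _ measurableT _ mg g0 ndg.
have -> : (\int[Pr]_w (u (X w) * v (Y w))%:E =
    \int[Pr]_(w in setT) (fun w => limn (g ^~ w)) w)%E.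
  by apply: eq_integral => w _; rewrite limg.
rewrite -(cvg_lim _ cv) //.
apply: lime_le; first by apply/cvg_ex; eexists; exact: cv.
apply: nearW => n.
rewrite /g /a /b !approx_sf int_sf_prod; last 4 first.
- exact: apx_c0.
- exact: apx_c0.
- exact: apx_mA.
- exact: apx_mA.
rewrite -!approx_sf.
apply: lee_pmul.
- by apply: integral_ge0 => w _; rewrite lee_fin.
- by apply: integral_ge0 => w _; rewrite lee_fin.
- apply: ge0_le_integral => //.
  + by move=> w _; rewrite lee_fin.
  + by apply/measurable_EFinP; exact: measurableT_comp (ma n) mX.
  + by apply/measurable_EFinP; exact: measurableT_comp mu mX.
  + by move=> w _; rewrite lee_fin.
- apply: ge0_le_integral => //.
  + by move=> w _; rewrite lee_fin.
  + by apply/measurable_EFinP; exact: measurableT_comp (mb n) mY.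
  + by apply/measurable_EFinP; exact: measurableT_comp mv mY.
  + by move=> w _; rewrite lee_fin.
Qed.

End Indep.

Definition dot {R : realType} {n} (a x : 'cV[R]_n) : R := (a^T *m x) 0 0.

Section Helpers.
Variables (R : realType) (d0 : measure_display) (T : measurableType d0)
  (Pr : probability T R).


Lemma dot0 n (s : 'cV[R]_n) : dot 0 s = 0.
Proof. by rewrite /dot trmx0 mul0mx mxE. Qed.

Lemma logMGF0 n (X : T -> 'cV[R]_n) : logMGF Pr X 0 = 0%E.
Proof.
rewrite /logMGF.
under eq_integral do rewrite trmx0 mul0mx mxE expR0.
rewrite integral_cst //.
have -> : (1 * Pr [set: T] = 1)%E by rewrite mul1e; exact: probability_setT.
exact: lne1.
Qed.

Lemma conj_ge0 n (X : T -> 'cV[R]_n) s : (0 <= logMGF_conj Pr X s)%E.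
Proof.
apply: (@le_trans _ _ ((((0 : 'cV[R]_n)^T *m s) 0 0)%:E - logMGF Pr X 0)%E).
  by rewrite logMGF0 trmx0 mul0mx mxE sube0.
by apply: ereal_sup_ubound; exists 0.
Qed.

Lemma lt_sub_exists (alpha z : R) (L : \bar R) : (alpha%:E < z%:E - L)%E ->
  exists r : R, (L <= r%:E)%E /\ alpha < z - r.
Proof.
case: L => [l| |] /=.
- by rewrite -EFinD lte_fin => h; exists l; split.
- by rewrite addeNy ltNge leNye.
- by move=> _; exists (z - alpha - 1); split; [exact: leNye|lra].
Qed.

Lemma conj_gt n (X : T -> 'cV[R]_n) s (alpha : R) :
  (alpha%:E < logMGF_conj Pr X s)%E ->
  exists a r, (\int[Pr]_w (expR (dot a (X w)))%:E <= (expR r)%:E)%E /\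
              alpha < dot a s - r.
Proof.
move=> /ereal_sup_gt [y [a _ <-]] h.
have [r [Lr ar]] := lt_sub_exists _ _ _ h.
exists a, r; split => //.
have M0 : (0 <= \int[Pr]_w (expR (dot a (X w)))%:E)%E.
  by apply: integral_ge0 => w _; rewrite lee_fin expR_ge0.
rewrite -(lneK (x := (\int[Pr]_w (expR (dot a (X w)))%:E)%E)); last first.
  by rewrite in_itv /= M0 leey.
have -> : ((expR r)%:E = expeR r%:E)%E by [].
by rewrite lee_expeR.
Qed.

Lemma split_lt (u v : \bar R) (c : R) : (0 <= u)%E -> (0 <= v)%E ->
  (c%:E < u + v)%E -> exists alpha : R, (alpha%:E < u)%E /\ ((c - alpha)%:E < v)%E.
Proof.
case: u => [u| |] //; case: v => [v| |] //=.
- rewrite !lee_fin -EFinD lte_fin => u0 v0 h.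
  exists (u - (u + v - c) / 2); rewrite !lte_fin; split; lra.
- move=> u0 _ _; exists (u - 1); split; [rewrite lte_fin; lra|exact: ltry].
- move=> _ v0 _; exists (c + 1); split; first exact: ltry.
  by apply: (@lt_le_trans _ _ 0%E) => //; rewrite lte_fin; lra.
- by move=> _ _ _; exists 0; split; exact: ltry.
Qed.

Lemma final_step (x m : \bar R) :
  (forall c : R, (c%:E < m)%E -> (x <= (- c)%:E)%E) -> (x <= - m)%E.
Proof.
case: m => [r| |] H /=.
- apply/lee_addgt0Pr => e e0.
  have := H (r - e); rewrite lte_fin => /(_ ltac:(lra)).
  by rewrite -EFinD; have -> : - (r - e) = - r + e by ring.
- case: x H => [l| |] H //.
  + by have := H (- l + 1) (ltry _); rewrite lee_fin => h; exfalso; lra.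
  + by have := H 0 (ltry _).
- exact: leey.
Qed.

End Helpers.

Lemma contD2 (R : realType) (X : topologicalType) (f g : X -> R) :
  continuous f -> continuous g -> continuous (fun x => f x + g x).
Proof.
move=> cf cg x; have -> : (fun x => f x + g x) = (f + g)%R by [].
by apply: continuousD; [exact: cf|exact: cg].
Qed.

Lemma contM2 (R : realType) (X : topologicalType) (f g : X -> R) :
  continuous f -> continuous g -> continuous (fun x => f x * g x).
Proof.
move=> cf cg x; have -> : (fun x => f x * g x) = (f \* g)%R by [].
by apply: continuousM; [exact: cf|exact: cg].
Qed.

Section Lin.
Variables (R : realType) (n m : nat).

Definition linf (U : 'M[R]_(1,n)) (V : 'M[R]_(1,m)) (k : R)
  (x : ('cV[R]_n * 'cV[R]_m)%type) : R := (U *m x.1) 0 0 + (V *m x.2) 0 0 + k.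

Lemma entryD (A B : 'M[R]_(1,1)) : (A + B) 0 0 = A 0 0 + B 0 0.
Proof. by rewrite mxE. Qed.
Lemma entryZ l (A : 'M[R]_(1,1)) : (l *: A) 0 0 = l * A 0 0.
Proof. by rewrite mxE. Qed.

Lemma linf_aff U V k x y l :
  linf U V k (l *: x.1 + (1 - l) *: y.1, l *: x.2 + (1 - l) *: y.2) =
  l * linf U V k x + (1 - l) * linf U V k y.
Proof. by rewrite /linf /= !mulmxDr -!scalemxAr !entryD !entryZ; ring. Qed.

Lemma linf_cont U V k : continuous (linf U V k).
Proof.
have c1 j : continuous (fun x : ('cV[R]_n * 'cV[R]_m)%type => x.1 j 0).
  move=> x; apply: (continuous_comp (f := fst) (g := fun M : 'cV[R]_n => M j 0)).
    exact: cvg_fst.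
  exact: coord_continuous.
have c2 j : continuous (fun x : ('cV[R]_n * 'cV[R]_m)%type => x.2 j 0).
  move=> x; apply: (continuous_comp (f := snd) (g := fun M : 'cV[R]_m => M j 0)).
    exact: cvg_snd.
  exact: coord_continuous.
have -> : linf U V k = (fun x => (\sum_j U 0 j * x.1 j 0 + \sum_j V 0 j * x.2 j 0) + k).
  by apply: funext => x; rewrite /linf !mxE.
apply: contD2; last exact: cst_continuous.
apply: contD2; apply: cont_sum => j; apply: contM2;
  (try exact: cst_continuous); [exact: c1|exact: c2].
Qed.

End Lin.

Theorem theorem1 (R : realType) (d p : nat)
    (d0 : measure_display) (T : measurableType d0) (Pr : probability T R)
    (S : T -> 'cV[R]_d) (Om : T -> 'cV[R]_p)
    (f : 'cV[R]_d -> R) (g : 'cV[R]_p -> R)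
    (D : 'M[R]_(p, d)) (P : 'M[R]_p) (q : 'cV[R]_p)
    (Rset : set ('cV[R]_d * 'cV[R]_p)) :
  random_vector S -> random_vector Om ->
  has_density Pr S f -> has_density Pr Om g ->
  closure [set w | g w != 0] = setT ->
  indep_rv Pr S Om ->
  P \in unitmx ->
  convex_pair Rset -> compact Rset ->
  (lne (Pr [set w | Rset (S w, invmx P *m (Om w - D *m S w - q))])
   <= - ereal_inf ((fun so : 'cV[R]_d * 'cV[R]_p =>
          logMGF_conj Pr S so.1 + logMGF_conj Pr Om (D *m so.1 + P *m so.2 + q))
        @` Rset))%E.
Proof.
move=> rvS rvOm _ _ _ ind Punit convR cR.
have cS : cmeas S by move=> i; exact: rv_coord.
have cOm : cmeas Om by move=> i; exact: rv_coord.
have cO : cmeas (fun w => invmx P *m (Om w - D *m S w - q)).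
  apply: (@cmeas_mul R d0 T p p (invmx P) (fun w => Om w - D *m S w - q)).
  apply: (@cmeas_add R d0 T p (fun w => Om w - D *m S w) (fun=> - q)).
    apply: (@cmeas_add R d0 T p Om (fun w => - (D *m S w))) => //.
    apply: (@cmeas_opp R d0 T p (fun w => D *m S w)).
    exact: (@cmeas_mul R d0 T p d D S).
  apply: (@cmeas_opp R d0 T p (fun=> q)); exact: cmeas_cst.
set E := [set w | Rset (S w, invmx P *m (Om w - D *m S w - q))].
have mE : measurable E by exact: event_meas.
set Jf := (fun so : 'cV[R]_d * 'cV[R]_p =>
          logMGF_conj Pr S so.1 + logMGF_conj Pr Om (D *m so.1 + P *m so.2 + q)).
apply: final_step => c cm.
have cJ : forall x, Rset x -> (c%:E < Jf x)%E.
  by move=> x Rx; apply: (lt_le_trans cm); apply: ereal_inf_lbound; exists x.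
have [Rne|R0] := pselect (Rset !=set0); last first.
  have -> : E = set0.
    by apply/seteqP; split => w // Ew; apply: R0; exists (S w, invmx P *m (Om w - D *m S w - q)).
  by rewrite measure0 le0_lneNy //; exact: leNye.
pose I := ('cV[R]_d * 'cV[R]_p * R * R)%type.
pose MS (a : 'cV[R]_d) := (\int[Pr]_w (expR (dot a (S w)))%:E)%E.
pose MO (b : 'cV[R]_p) := (\int[Pr]_w (expR (dot b (Om w)))%:E)%E.
pose DI := fun th : I => (MS th.1.1.1 <= (expR th.1.2)%:E)%E /\ (MO th.1.1.2 <= (expR th.2)%:E)%E.
pose psi := fun (th : I) (x : ('cV[R]_d * 'cV[R]_p)%type) =>
   dot th.1.1.1 x.1 + dot th.1.1.2 (D *m x.1 + P *m x.2 + q) - th.1.2 - th.2.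
have psi_lin th : psi th = @linf R d p (th.1.1.1^T + th.1.1.2^T *m D) (th.1.1.2^T *m P)
    (dot th.1.1.2 q - th.1.2 - th.2).
  apply: funext => x; rewrite /psi /linf /dot mulmxDl !mulmxDr !entryD !mulmxA; ring.
pose seg := fun (l : R) (x y : ('cV[R]_d * 'cV[R]_p)%type) =>
  (l *: x.1 + (1 - l) *: y.1, l *: x.2 + (1 - l) *: y.2).
have hconv : forall x y l, Rset x -> Rset y -> 0 <= l <= 1 -> Rset (seg l x y).
  by move=> x y l Rx Ry hl; exact: convR.
have haff : forall th x y l, psi th (seg l x y) = l * psi th x + (1 - l) * psi th y.
  by move=> th x y l; rewrite psi_lin; exact: linf_aff.
have hcont : forall th, continuous (psi th).
  by move=> th; rewrite psi_lin; exact: linf_cont.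
have hcov : forall x, Rset x -> exists2 th, DI th & c < psi th x.
  move=> [s o] Rx; have := cJ _ Rx; rewrite /Jf /= => h.
  have [al [h1 h2]] := @split_lt R _ _ c (@conj_ge0 R d0 T Pr d S s)
    (@conj_ge0 R d0 T Pr p Om (D *m s + P *m o + q)) h.
  have [a [r1 [Ma ar]]] := @conj_gt R d0 T Pr d S s al h1.
  have [b [r2 [Mb br]]] := @conj_gt R d0 T Pr p Om _ _ h2.
  exists (a, b, r1, r2); first by split.
  rewrite /psi /=; lra.
have [L [L0 L1 Lc]] := @minimax R _ seg Rset _ DI psi c cR Rne hconv haff hcont hcov.
have Om_eq w : D *m S w + P *m (invmx P *m (Om w - D *m S w - q)) + q = Om w.
  by rewrite mulmxA mulmxV // mul1mx -addrA subrK addrC subrK.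
pose hh w := \sum_(pp <- L) `|pp.1| * (expR (dot pp.2.1.1.1 (S w)) *
   expR (dot pp.2.1.1.2 (Om w)) * expR (- pp.2.1.2 - pp.2.2 - c)).
have hh0 w : 0 <= hh w.
  rewrite /hh; apply: sumr_ge0 => pp _.
  by rewrite mulr_ge0 // !mulr_ge0 // expR_ge0.
have hh_ge1 w : E w -> 1 <= hh w.
  move=> Ew; have := Lc _ Ew.
  have epsi pp : psi pp.2 (S w, invmx P *m (Om w - D *m S w - q)) =
      dot pp.2.1.1.1 (S w) + dot pp.2.1.1.2 (Om w) - pp.2.1.2 - pp.2.2.
    by rewrite /psi /= Om_eq.
  under eq_bigr do rewrite epsi.
  move=> hc.
  have h1 : \sum_(pp <- L) pp.1 * (1 + (dot pp.2.1.1.1 (S w) + dot pp.2.1.1.2 (Om w)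
       - pp.2.1.2 - pp.2.2 - c)) <= hh w.
    rewrite /hh big_seq [X in _ <= X]big_seq; apply: ler_sum => pp Lp.
    have [p0 _] := L0 pp Lp.
    rewrite ger0_norm //.
    apply: ler_wpM2l => //; rewrite -!expRD.
    have -> : dot pp.2.1.1.1 (S w) + dot pp.2.1.1.2 (Om w) + (- pp.2.1.2 - pp.2.2 - c) =
      dot pp.2.1.1.1 (S w) + dot pp.2.1.1.2 (Om w) - pp.2.1.2 - pp.2.2 - c by ring.
    exact: expR_ge1Dx.
  apply: le_trans h1.
  have -> : \sum_(pp <- L) pp.1 * (1 + (dot pp.2.1.1.1 (S w) + dot pp.2.1.1.2 (Om w)
       - pp.2.1.2 - pp.2.2 - c)) =
     \sum_(pp <- L) pp.1 + \sum_(pp <- L) pp.1 * (dot pp.2.1.1.1 (S w) +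
        dot pp.2.1.1.2 (Om w) - pp.2.1.2 - pp.2.2) - c * \sum_(pp <- L) pp.1.
    rewrite mulr_sumr -big_split -sumrB /=; apply: eq_bigr => pp _; ring.
  rewrite L1; lra.
have mE1 : forall (a : 'cV[R]_d), measurable_fun setT (fun w => expR (dot a (S w))).
  move=> a; apply: (measurableT_comp (f := expR) (g := fun w => dot a (S w))).
    exact: measurable_expR.
  exact: (@dot_meas R d0 T d a S cS).
have mO1 : forall (b : 'cV[R]_p), measurable_fun setT (fun w => expR (dot b (Om w))).
  move=> b; apply: (measurableT_comp (f := expR) (g := fun w => dot b (Om w))).
    exact: measurable_expR.
  exact: (@dot_meas R d0 T p b Om cOm).
have key : (Pr E <= (expR (- c))%:E)%E.
  rewrite -(setIT E) -(integral_indic Pr measurableT mE).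
  apply: (@le_trans _ _ (\int[Pr]_w (hh w)%:E)%E).
    have i0 : forall w, setT w -> (0 <= (\1_E w : R)%:E)%E by move=> w _; rewrite lee_fin.
    have mi : measurable_fun setT (fun w => (\1_E w : R)%:E).
      by apply/measurable_EFinP; exact: measurable_indic.
    have mh : measurable_fun setT (fun w => (hh w)%:E).
      apply/measurable_EFinP; apply: measurable_sum => pp.
      apply: measurable_funM; first exact: measurable_cst.
      apply: measurable_funM; last exact: measurable_cst.
      by apply: measurable_funM; [exact: mE1|exact: mO1].
    apply: (ge0_le_integral _ measurableT i0 mi mh).
    move=> w _; rewrite lee_fin indicE.
    case: (boolP (w \in E)) => h /=; last exact: hh0.
    by rewrite in_setE in h; exact: hh_ge1.
  rewrite /hh; under eq_integral do rewrite -sumEFin.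
  have mf : forall pp : (R * I)%type, measurable_fun setT (fun w => (`|pp.1| *
      (expR (dot pp.2.1.1.1 (S w)) * expR (dot pp.2.1.1.2 (Om w)) *
       expR (- pp.2.1.2 - pp.2.2 - c)))%:E).
    move=> pp; apply/measurable_EFinP.
    apply: measurable_funM; first exact: measurable_cst.
    apply: measurable_funM; last exact: measurable_cst.
    by apply: measurable_funM; [exact: mE1|exact: mO1].
  have f0 : forall (pp : (R * I)%type) w, setT w -> (0 <= (`|pp.1| *
      (expR (dot pp.2.1.1.1 (S w)) * expR (dot pp.2.1.1.2 (Om w)) *
       expR (- pp.2.1.2 - pp.2.2 - c)))%:E)%E.
    move=> pp w _; rewrite lee_fin.
    by rewrite mulr_ge0 // !mulr_ge0 // expR_ge0.
  rewrite (ge0_integral_sum _ measurableT mf f0).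
  have -> : ((expR (- c))%:E = \sum_(pp <- L) (pp.1 * expR (- c))%:E)%E.
    by rewrite sumEFin -mulr_suml L1 mul1r.
  rewrite big_seq [X in (_ <= X)%E]big_seq; apply: lee_sum => pp Lp.
  have [p0 [Ma Mb]] := L0 pp Lp.
  move: Ma Mb; rewrite /MS /MO.
  set a := pp.2.1.1.1; set b := pp.2.1.1.2; set r1 := pp.2.1.2; set r2 := pp.2.2.
  move=> Ma Mb.
  set K := `|pp.1| * expR (- r1 - r2 - c).
  have K0 : 0 <= K by rewrite /K mulr_ge0 // expR_ge0.
  have -> : (\int[Pr]_w (`|pp.1| * (expR (dot a (S w)) * expR (dot b (Om w)) *
      expR (- r1 - r2 - c)))%:E =
      \int[Pr]_w (K%:E * (expR (dot a (S w)) * expR (dot b (Om w)))%:E))%E.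
    by apply: eq_integral => w _; rewrite -EFinM /K; congr (_%:E); ring.
  have mab : measurable_fun setT (fun w => (expR (dot a (S w)) * expR (dot b (Om w)))%:E).
    by apply/measurable_EFinP; apply: measurable_funM; [exact: mE1|exact: mO1].
  have ab0 : forall w, setT w -> (0 <= (expR (dot a (S w)) * expR (dot b (Om w)))%:E)%E.
    by move=> w _; rewrite lee_fin mulr_ge0 // expR_ge0.
  rewrite (ge0_integralZl Pr measurableT mab ab0); last by rewrite lee_fin.
  have mu : measurable_fun setT (fun x : cVm R d => expR (dot a x)).
    apply: (measurableT_comp (f := expR) (g := fun x : cVm R d => dot a x)).
      exact: measurable_expR.
    exact: (@dot_meas R _ (cVm R d) d a (fun x => x) (fun i => coord_meas R d i)).
  have mv : measurable_fun setT (fun y : cVm R p => expR (dot b y)).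
    apply: (measurableT_comp (f := expR) (g := fun y : cVm R p => dot b y)).
      exact: measurable_expR.
    exact: (@dot_meas R _ (cVm R p) p b (fun x => x) (fun i => coord_meas R p i)).
  have hind := @indep_int_le R d0 _ _ T (cVm R d) (cVm R p) Pr S Om
    (@rv_meas R d0 T d S rvS) (@rv_meas R d0 T p Om rvOm)
    (fun A B mA mB => ind A B mA mB) (fun x => expR (dot a x)) (fun y => expR (dot b y))
    (fun x => expR_ge0 _) (fun y => expR_ge0 _) mu mv.
  apply: le_trans; first by apply: lee_wpmul2l; [rewrite lee_fin|exact: hind].
  apply: le_trans.
    apply: lee_wpmul2l; first by rewrite lee_fin.
    apply: lee_pmul; [| |exact: Ma|exact: Mb].
    - by apply: integral_ge0 => w _; rewrite lee_fin expR_ge0.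
    - by apply: integral_ge0 => w _; rewrite lee_fin expR_ge0.
  rewrite -!EFinM lee_fin /K ger0_norm // -mulrA.
  have -> : expR (- r1 - r2 - c) * (expR r1 * expR r2) = expR (- c).
    by rewrite -!expRD; congr expR; ring.
  by [].
have lnE : (lne (Pr E) <= lne (expR (- c))%:E)%E.
  rewrite lee_lne //; rewrite in_itv /= ?leey ?andbT //.
by rewrite lne_EFin ?expR_gt0 // expRK in lnE.
Qed.
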